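(* Let $Q$ be a commutative automorphic loop of nilpotency class $3$. Then $((a,b,c),d,e)^{-1}=(e,d,(a,b,c))$ and $(a,(b,c,d),e)=(a,e,(b,c,d))((b,c,d),a,e)$ for every $a,b,c,d,e\in Q$.
   Context: A loop is a set with a binary operation such that all left and right translations $L_a:b\mapsto ab$, $R_a:b\mapsto ba$ are bijections and there is a two-sided identity $1$. The inner mapping group is the stabilizer of $1$ in the group generated by all translations; $Q$ is automorphic if all inner mappings are automorphisms. The associator $(a,b,c)$ is defined by $(ab)c=(a(bc))(a,b,c)$. The center $Z(Q)$ is the set of elements fixed by all inner mappings; $Z_0=1$, $Z_{i+1}(Q)$ is the preimage of $Z(Q/Z_i(Q))$, and $Q$ has nilpotency class $n$ if $Z_{n-1}(Q)\neq Q=Z_n(Q)$. Inverses $z^{-1}$ are two-sided inverses (automorphic loops are power-associative). *)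

(* Defs.v *)
Set Implicit Arguments.

(* A loop, given with its (uniquely determined) left and right divisions:
   the axioms say exactly that every L_a : b |-> a*b and R_a : b |-> b*a
   is a bijection (with inverses b |-> a \ b and b |-> b / a), and 1 is a
   two-sided identity. *)
Record loop := Loop {
  carrier :> Type;
  mul : carrier -> carrier -> carrier;
  ldiv : carrier -> carrier -> carrier;
  rdiv : carrier -> carrier -> carrier;
  one : carrier;
  mul_ldiv : forall a b, mul a (ldiv a b) = b;
  ldiv_mul : forall a b, ldiv a (mul a b) = b;
  rdiv_mul : forall a b, mul (rdiv b a) a = b;
  mul_rdiv : forall a b, rdiv (mul b a) a = b;
  one_mul : forall x, mul one x = x;
  mul_one : forall x, mul x one = x
}.

Arguments mul {l}.
Arguments ldiv {l}.
Arguments rdiv {l}.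
Arguments one {l}.

(* The multiplication group Mlt(Q): the group generated by all left and
   right translations (identity, translations, their inverses, closed
   under composition; closure under inverses follows). *)
Inductive mlt (Q : loop) : (Q -> Q) -> Prop :=
| mlt_id : mlt Q (fun x => x)
| mlt_L a : mlt Q (fun x => mul a x)
| mlt_R a : mlt Q (fun x => mul x a)
| mlt_Linv a : mlt Q (fun x => ldiv a x)
| mlt_Rinv a : mlt Q (fun x => rdiv x a)
| mlt_comp f g : mlt Q f -> mlt Q g -> mlt Q (fun x => f (g x)).

Arguments mlt {Q}.
Definition inner (Q : loop) (f : Q -> Q) : Prop := mlt f /\ f one = one.
Arguments inner {Q}.

Definition automorphic (Q : loop) : Prop :=
  forall f : Q -> Q, inner f -> forall x y, f (mul x y) = mul (f x) (f y).

Definition commutative_loop (Q : loop) : Prop := forall a b : Q, mul a b = mul b a.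

(* Associator: (ab)c = (a(bc)) (a,b,c). *)
Definition assoc (Q : loop) (a b c : Q) : Q :=
  ldiv (mul a (mul b c)) (mul (mul a b) c).

(* (two-sided, in the loops considered) inverse *)
Definition linv (Q : loop) (z : Q) : Q := ldiv z one.
Arguments linv {Q}.
Arguments assoc {Q}.

(* Z_0 = {1};  Z_{i+1} = preimage of Z(Q/Z_i),
   where Z(Q/N) = classes fixed by all inner mappings of Q/N.
   Unfolding the quotient: Mlt(Q/N) consists of the maps induced by
   elements f of Mlt(Q); such an induced map is inner in Q/N iff
   f 1 \in N, and it fixes the class xN iff f x \in xN. *)
Fixpoint upper_center (Q : loop) (i : nat) : Q -> Prop :=
  match i with
  | 0 => fun x => x = one
  | S i' => fun x =>
      forall f : Q -> Q, mlt f -> upper_center Q i' (f one) ->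
        exists n, upper_center Q i' n /\ f x = mul x n
  end.

Definition nilpotency_class (Q : loop) (n : nat) : Prop :=
  (exists x : Q, ~ upper_center Q (n - 1) x) /\ (forall x : Q, upper_center Q n x).

(* Main.v *)
Require Import Defs.
From Stdlib Require Import Setoid.
Set Implicit Arguments.

Lemma ldiv_self (Q : loop) (a : Q) : ldiv a a = one.
Proof. rewrite <- (mul_one Q a) at 2. apply ldiv_mul. Qed.

Lemma rdiv_self (Q : loop) (a : Q) : rdiv a a = one.
Proof. rewrite <- (one_mul Q a) at 1. apply mul_rdiv. Qed.

Lemma assoc_eq (Q : loop) (p q r : Q) :
  mul (mul p q) r = mul (mul p (mul q r)) (assoc p q r).
Proof. unfold assoc. rewrite mul_ldiv. reflexivity. Qed.

Lemma uc_one (Q : loop) (i : nat) : upper_center Q i one.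
Proof.
  destruct i; simpl. reflexivity.
  intros f _ H. exists (f one). split. exact H. symmetry. apply one_mul.
Qed.

Definition central (Q : loop) (m : Q) := upper_center Q 1 m.

Lemma central_fix (Q : loop) (m : Q) : central Q m ->
  forall f, mlt f -> f one = one -> f m = m.
Proof.
  intros Hm f Hf H1. destruct (Hm f Hf H1) as [n [Hn Hfm]].
  simpl in Hn. rewrite Hfm, Hn. apply mul_one.
Qed.

Lemma NR (Q : loop) (m : Q) : central Q m -> forall x y : Q,
  mul (mul x y) m = mul x (mul y m).
Proof.
  intros Hm x y.
  assert (H := central_fix Hm (f := fun z => ldiv (mul x y) (mul x (mul y z)))).
  simpl in H.
  assert (E : ldiv (mul x y) (mul x (mul y m)) = m).
  { apply H.
    - apply mlt_comp. apply mlt_Linv. apply mlt_comp. apply mlt_L. apply mlt_L.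
    - rewrite !mul_one. apply ldiv_self. }
  rewrite <- E at 1. rewrite mul_ldiv. reflexivity.
Qed.

Lemma NM (Q : loop) (HC : commutative_loop Q) (m : Q) : central Q m ->
  forall u a : Q, mul (mul u m) a = mul (mul u a) m.
Proof.
  intros Hm u a. rewrite (HC (mul u m) a), <- (NR Hm), (HC a u). reflexivity.
Qed.

Lemma mlt_central (Q : loop) (HC : commutative_loop Q) (m : Q) : central Q m ->
  forall f, mlt f -> forall y, f (mul y m) = mul (f y) m.
Proof.
  intros Hm f Hf. induction Hf; intro y.
  - reflexivity.
  - symmetry. apply NR; assumption.
  - apply NM; assumption.
  - rewrite <- (mul_ldiv Q a y) at 1. rewrite (NR Hm). apply ldiv_mul.
  - rewrite <- (rdiv_mul Q a y) at 1. rewrite <- (NM HC Hm). apply mul_rdiv.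
  - rewrite IHHf2. apply IHHf1.
Qed.

Lemma central_mul (Q : loop) (HC : commutative_loop Q) (n m : Q) :
  central Q n -> central Q m -> mul (mul n m) = mul (mul n m).
Proof. reflexivity. Qed.

Lemma Z2_mul (Q : loop) (HC : commutative_loop Q) (z m : Q) :
  upper_center Q 2 z -> central Q m -> upper_center Q 2 (mul z m).
Proof.
  intros Hz Hm f Hf H1.
  destruct (Hz f Hf H1) as [n [Hn Hfz]].
  exists n. split. exact Hn.
  rewrite (mlt_central HC Hm Hf), Hfz.
  rewrite (NR Hm), (HC n m), <- (NR Hn). reflexivity.
Qed.

Lemma key2 (Q : loop) (HC : commutative_loop Q) (x : Q) (F G G' : Q -> Q) :
  upper_center Q 2 x -> mlt F -> mlt G -> mlt G' -> (forall y, G (G' y) = y) ->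
  G' (F one) = one -> exists n, central Q n /\ F x = mul (G x) n.
Proof.
  intros Hx HF HG HG' HGG H1.
  assert (U : upper_center Q 1 ((fun y => G' (F y)) one)).
  { cbv beta. rewrite H1. apply uc_one. }
  destruct (Hx (fun y => G' (F y)) (mlt_comp HG' HF) U) as [n [Hn E]].
  exists n. split. exact Hn.
  rewrite <- (HGG (F x)). rewrite E. apply (mlt_central HC Hn HG).
Qed.

Lemma assoc_Z2 (Q : loop) (HC : commutative_loop Q) (H3 : forall x : Q, upper_center Q 3 x)
  (p q r : Q) : upper_center Q 2 (assoc p q r).
Proof.
  assert (M : mlt (fun y => rdiv (mul (mul y q) r) (mul q r))).
  { apply (mlt_comp (f := fun x => rdiv x (mul q r)) (g := fun y => mul (mul y q) r)).
    apply mlt_Rinv.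
    apply (mlt_comp (f := fun x => mul x r) (g := fun y => mul y q)); apply mlt_R. }
  assert (U : upper_center Q 2 ((fun y => rdiv (mul (mul y q) r) (mul q r)) one)).
  { cbv beta. rewrite one_mul, rdiv_self. apply uc_one. }
  destruct (H3 p _ M U) as [n [Hn E]].
  assert (E2 : mul (mul p q) r = mul (mul p n) (mul q r)).
  { rewrite <- E. symmetry. apply rdiv_mul. }
  destruct (key2 HC (F := fun y => mul (mul p y) (mul q r))
                    (G := fun y => mul (mul p (mul q r)) y)
                    (G' := fun y => ldiv (mul p (mul q r)) y) Hn) as [m [Hm E3]].
  - apply (mlt_comp (f := fun z => mul z (mul q r)) (g := fun y => mul p y)).
    apply mlt_R. apply mlt_L.
  - apply mlt_L.
  - apply mlt_Linv.
  - intro y. apply mul_ldiv.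
  - rewrite mul_one. apply ldiv_self.
  - simpl in E3. unfold assoc. rewrite E2, E3, (NR Hm), ldiv_mul.
    apply Z2_mul; assumption.
Qed.

Lemma assoc_r_central (Q : loop) (HC : commutative_loop Q) (x u v : Q) :
  upper_center Q 2 x -> central Q (assoc u v x).
Proof.
  intro Hx.
  destruct (key2 HC (F := fun y => mul (mul u v) y) (G := fun y => mul u (mul v y))
                    (G' := fun y => ldiv v (ldiv u y)) Hx) as [n [Hn E]].
  - apply mlt_L.
  - apply (mlt_comp (f := fun z => mul u z) (g := fun y => mul v y)); apply mlt_L.
  - apply (mlt_comp (f := fun z => ldiv v z) (g := fun y => ldiv u y)); apply mlt_Linv.
  - intro y. rewrite !mul_ldiv. reflexivity.
  - rewrite mul_one, ldiv_mul. apply ldiv_self.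
  - unfold assoc. rewrite E, ldiv_mul. exact Hn.
Qed.

Lemma assoc_l_central (Q : loop) (HC : commutative_loop Q) (x u v : Q) :
  upper_center Q 2 x -> central Q (assoc x u v).
Proof.
  intro Hx.
  destruct (key2 HC (F := fun y => mul (mul y u) v) (G := fun y => mul y (mul u v))
                    (G' := fun y => rdiv y (mul u v)) Hx) as [n [Hn E]].
  - apply (mlt_comp (f := fun z => mul z v) (g := fun y => mul y u)); apply mlt_R.
  - apply mlt_R.
  - apply mlt_Rinv.
  - intro y. apply rdiv_mul.
  - rewrite one_mul. apply rdiv_self.
  - unfold assoc. rewrite E, ldiv_mul. exact Hn.
Qed.

Lemma cancel_l (Q : loop) (y s t : Q) : mul y s = mul y t -> s = t.
Proof. intro H. rewrite <- (ldiv_mul Q y s), H. apply ldiv_mul. Qed.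

Unset Implicit Arguments.
Theorem lemma2p5 (Q : loop) (HC : commutative_loop Q) (HA : automorphic Q)
  (Hn : nilpotency_class Q 3) :
  forall a b c d e : Q,
    linv (assoc (assoc a b c) d e) = assoc e d (assoc a b c) /\
    assoc a (assoc b c d) e = mul (assoc a e (assoc b c d)) (assoc (assoc b c d) a e).
Proof.
  destruct Hn as [_ H3].
  intros a b c d e. split.
  - set (x := assoc a b c).
    assert (Hx : upper_center Q 2 x) by apply (assoc_Z2 HC H3).
    assert (C2 := assoc_r_central HC e d Hx).
    assert (E1 := assoc_eq _ x d e). assert (E2 := assoc_eq _ e d x).
    assert (K : mul (mul x (mul d e)) one
                = mul (mul x (mul d e)) (mul (assoc x d e) (assoc e d x))).
    { rewrite mul_one, <- (NR C2), <- E1.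
      rewrite (HC (mul x d) e), (HC x d), <- E2, (HC e d), (HC (mul d e) x).
      reflexivity. }
    apply cancel_l in K. unfold linv. rewrite K. apply ldiv_mul.
  - set (x := assoc b c d).
    assert (Hx : upper_center Q 2 x) by apply (assoc_Z2 HC H3).
    assert (C2 := assoc_r_central HC a e Hx).
    assert (C3 := assoc_l_central HC a e Hx).
    apply (cancel_l _ (mul a (mul x e))).
    rewrite <- (assoc_eq _ a x e).
    rewrite (HC a x), (assoc_eq _ x a e), (HC x (mul a e)), (assoc_eq _ a e x).
    rewrite (NR C3), (HC e x). reflexivity.
Qed.
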